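(* Let $p$ be a prime, $k\ge1$, $\Gamma=\mathbb{Z}_p\,\mathrm{wr}\,\mathbb{Z}^k=\Sigma\rtimes_\alpha\mathbb{Z}^k$ with $\Sigma=\bigoplus_{x\in\mathbb{Z}^k}A_x$, and let $\phi:\Gamma\to\Gamma$ be an automorphism with restriction $\phi'=\phi|_\Sigma$. Then $\phi'(\delta_0)=m\cdot\delta_{x_0}$ for some $x_0\in\mathbb{Z}^k$ and some $0\neq m\in\mathbb{Z}_p$.
   Context: $\mathbb{Z}_p\,\mathrm{wr}\,\mathbb{Z}^k$ is the semidirect product $\Sigma\rtimes_\alpha\mathbb{Z}^k$, where $\Sigma=\bigoplus_{x\in\mathbb{Z}^k}A_x$ (finitely supported elements), each $A_x\cong\mathbb{Z}_p$ is generated by $\delta_x$, and $\alpha(y)(\delta_x)=\delta_{y+x}$ for $y\in\mathbb{Z}^k$. $\Sigma$ is the torsion subgroup, hence characteristic, so $\phi(\Sigma)=\Sigma$. *)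

(* Defs.v *)
From mathcomp Require Import all_boot all_algebra.
Set Implicit Arguments. Unset Strict Implicit. Unset Printing Implicit Defensive.
Import GRing.Theory.
Local Open Scope ring_scope.

Definition vec (k : nat) := {ffun 'I_k -> int}.

Definition fsupp (k p : nat) (f : vec k -> 'F_p) : Prop :=
  exists s : seq (vec k), forall x, f x != 0 -> x \in s.

Definition delta (k p : nat) (x : vec k) : vec k -> 'F_p :=
  fun z => (z == x)%:R.

(* alpha(y) g : x |-> g (x - y), so alpha(y) delta_x = delta_(y+x) *)
Definition shift (k p : nat) (y : vec k) (g : vec k -> 'F_p) : vec k -> 'F_p :=
  fun x => g (x - y).

Lemma fsupp_mul (k p : nat) (f g : vec k -> 'F_p) (y : vec k) :
  fsupp f -> fsupp g -> fsupp (fun x => f x + shift y g x).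
Proof.
move=> [s Hs] [t Ht]; exists (s ++ map (fun z => z + y) t) => x.
rewrite mem_cat /shift; case: (f x =P 0) => [->|/eqP /Hs -> //].
rewrite add0r => /Ht H; apply/orP; right; apply/mapP; exists (x - y) => //.
by rewrite subrK.
Qed.

Lemma fsupp_delta (k p : nat) (x : vec k) : fsupp (@delta k p x).
Proof.
exists [:: x] => z; rewrite mem_seq1 /delta.
by case: (z == x); rewrite ?eqxx.
Qed.

(* Gamma = Z_p wr Z^k = Sigma \rtimes_alpha Z^k, elements (f, y) with f finitely supported *)
Definition Gam (k p : nat) := {w : (vec k -> 'F_p) * vec k | fsupp w.1}.

Definition gmul (k p : nat) (a b : Gam k p) : Gam k p :=
  exist (fun w : (vec k -> 'F_p) * vec k => fsupp w.1)
    (fun x => (sval a).1 x + shift (sval a).2 (sval b).1 x, (sval a).2 + (sval b).2)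
    (fsupp_mul (sval a).2 (proj2_sig a) (proj2_sig b)).

Definition gdelta (k p : nat) (x : vec k) : Gam k p :=
  exist (fun w : (vec k -> 'F_p) * vec k => fsupp w.1) (@delta k p x, 0) (fsupp_delta p x).

Definition is_aut (k p : nat) (phi : Gam k p -> Gam k p) : Prop :=
  bijective phi /\ forall a b, phi (gmul a b) = gmul (phi a) (phi b).

(* Main.v *)
Require Import Defs.
From mathcomp Require Import all_boot all_order all_algebra.
From Stdlib Require Import ProofIrrelevance FunctionalExtensionality.
Import Order.TTheory GRing.Theory Num.Theory.
Set Implicit Arguments. Unset Strict Implicit. Unset Printing Implicit Defensive.
Local Open Scope ring_scope.

Definition vkey (k : nat) (x : vec k) : seqlexi int := [seq x i | i <- enum 'I_k].
Definition leV (k : nat) (x y : vec k) : bool := (vkey x <= vkey y)%O.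

Lemma leV_total k (x y : vec k) : leV x y || leV y x.
Proof. exact: le_total. Qed.

Lemma leV_trans k : transitive (@leV k).
Proof. move=> y x z; exact: le_trans. Qed.

Lemma leV_anti k (x y : vec k) : leV x y -> leV y x -> x = y.
Proof.
move=> h1 h2; have /eqP : vkey x == vkey y by by rewrite eq_le; apply/andP; split.
move=> /eq_in_map H; apply/ffunP => i; apply: H; exact: mem_enum.
Qed.

Lemma lexi_mapD k (r : seq 'I_k) (f g h : 'I_k -> int) :
  (([seq f i | i <- r] : seqlexi int) <= [seq g i | i <- r])%O ->
  (([seq f i + h i | i <- r] : seqlexi int) <= [seq g i + h i | i <- r])%O.
Proof.
elim: r => [//|a r IH] /=; rewrite !lexi_cons lerD2r lerD2r.
by case/andP=> -> /= /implyP H; apply/implyP => /H /IH.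
Qed.

Lemma leV_tr k (x y z : vec k) : leV x y -> leV (x + z) (y + z).
Proof.
rewrite /leV /vkey => H.
have E : forall v : vec k, [seq (v + z) i | i <- enum 'I_k] = [seq v i + z i | i <- enum 'I_k].
  by move=> v; apply: eq_map => i; rewrite ffunE.
rewrite !E; exact: lexi_mapD.
Qed.

Lemma max_ex (T : eqType) (le : rel T) (tot : forall x y, le x y || le y x)
  (tr : transitive le) (P : pred T) (s : seq T) :
  has P s -> exists M, [/\ M \in s, P M & forall x, x \in s -> P x -> le x M].
Proof.
elim: s => [//|a s IH] /=.
case Pa: (P a) => /= H.
  case Hs: (has P s).
    have [M [Ms PM HM]] := IH Hs.
    case/orP: (tot a M) => h.
      exists M; split => //; first by rewrite inE Ms orbT.
      move=> x; rewrite inE => /orP [/eqP -> //|]; exact: HM.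
    exists a; split => //; first by rewrite inE eqxx.
    move=> x; rewrite inE => /orP [/eqP -> _|xs Px].
      by case/orP: (tot a a).
    exact: tr (HM x xs Px) h.
  exists a; split => //; first by rewrite inE eqxx.
  move=> x; rewrite inE => /orP [/eqP -> _|xs Px].
    by case/orP: (tot a a).
  by move/hasPn: Hs => /(_ x xs); rewrite Px.
have [M [Ms PM HM]] := IH H.
exists M; split => //; first by rewrite inE Ms orbT.
move=> x; rewrite inE => /orP [/eqP -> |]; last exact: HM.
by rewrite Pa.
Qed.

Lemma key (k p : nat) (le : rel (vec k)) (tot : forall x y, le x y || le y x)
  (tr : transitive le) (anti : forall x y, le x y -> le y x -> x = y)
  (trD : forall x y z, le x y -> le (x + z) (y + z))
  (u c : vec k -> 'F_p) (su l : seq (vec k)) (w : vec k -> vec k) :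
  (forall z, u z != 0 -> z \in su) -> uniq l -> {in l &, injective w} ->
  (forall x, delta p 0 x = \sum_(y <- l) c y * u (x - w y)) ->
  exists Mu yM, [/\ u Mu != 0, forall z, u z != 0 -> le z Mu, yM \in l, c yM != 0 &
     Mu + w yM = 0 /\ forall y, y \in l -> c y != 0 -> le (w y) (w yM)].
Proof.
move=> Hsu ul winj Hd.
have d00 : delta p 0 (0 : vec k) = 1 by rewrite /delta eqxx.
have [hu|] := boolP (has (fun z => u z != 0) su); last first.
  move/hasPn => H; exfalso; have := Hd 0; rewrite d00 big1_seq ?oner_eq0 // => y _.
  case: (boolP (u (0 - w y) == 0)) => [/eqP -> |/[dup] /Hsu /H]; first by rewrite mulr0.
  by move/negP.
have [hc|] := boolP (has (fun y => c y != 0) l); last first.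
  move/hasPn => H; exfalso; have := Hd 0; rewrite d00 big1_seq ?oner_eq0 // => y /andP [_ yl].
  by have := H y yl; rewrite negbK => /eqP ->; rewrite mul0r.
have [Mu [_ uM HM]] := max_ex tot tr hu.
have tot' : forall x y, (fun a b => le (w a) (w b)) x y || (fun a b => le (w a) (w b)) y x.
  by move=> x y; exact: tot.
have tr' : transitive (fun a b => le (w a) (w b)).
  by move=> y x z h1 h2; exact: tr h1 h2.
have [yM [yMl cM HyM]] := max_ex tot' tr' hc.
have flip : forall a b d, le a b -> le (d - b) (d - a).
  move=> a b d h; have := trD _ _ (d - a - b) h.
  by rewrite addrA [a + _]addrC subrK [b + _]addrC subrK.
pose x := Mu + w yM.
have Hx : delta p 0 x = c yM * u Mu.
  rewrite Hd (bigD1_seq yM) //= {1}/x addrK big1_seq ?addr0 // => y /andP [ny yl].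
  case: (boolP (c y == 0)) => [/eqP -> |cy]; first by rewrite mul0r.
  case: (boolP (u (x - w y) == 0)) => [/eqP -> |uy]; first by rewrite mulr0.
  have h1 := HyM y yl cy.
  have h2 := flip _ _ x (HM _ (Hsu _ uy) uy).
  rewrite /x addrC addKr subKr in h2.
  by rewrite (winj _ _ yl yMl (anti _ _ h1 h2)) eqxx in ny.
exists Mu, yM; split => //.
  by move=> z uz; exact: HM (Hsu _ uz) uz.
split => //.
have : delta p 0 x != 0 by rewrite Hx mulf_neq0.
by rewrite /delta; case: (x == 0) /eqP => // _; rewrite eqxx.
Qed.

Notation g1 a := (sval a).1.
Notation g2 a := (sval a).2.

Lemma gam_eq k p (a b : Gam k p) : sval a = sval b -> a = b.
Proof.
case: a => [a Ha]; case: b => [b Hb] /= E; subst b; f_equal; apply: proof_irrelevance.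
Qed.

Lemma fsupp0 k p : fsupp (fun _ : vec k => (0 : 'F_p)).
Proof. by exists [::] => x; rewrite eqxx. Qed.

Definition gone k p : Gam k p :=
  exist (fun w : (vec k -> 'F_p) * vec k => fsupp w.1) (fun _ => 0, 0) (fsupp0 k p).
Definition gtr k p (y : vec k) : Gam k p :=
  exist (fun w : (vec k -> 'F_p) * vec k => fsupp w.1) (fun _ => 0, y) (fsupp0 k p).

Fixpoint gpow k p (a : Gam k p) (n : nat) : Gam k p :=
  if n is n'.+1 then gmul a (gpow a n') else gone k p.

Lemma shift0 k p (f : vec k -> 'F_p) x : shift 0 f x = f x.
Proof. by rewrite /shift subr0. Qed.

Lemma gmul2 k p (a b : Gam k p) : g2 (gmul a b) = g2 a + g2 b.
Proof. by []. Qed.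

Lemma gmul1 k p (a b : Gam k p) : g1 (gmul a b) = fun x => g1 a x + shift (g2 a) (g1 b) x.
Proof. by []. Qed.

Lemma phi_one k p (phi : Gam k p -> Gam k p) : is_aut phi -> phi (gone k p) = gone k p.
Proof.
move=> [_ hom].
have E : gmul (gone k p) (gone k p) = gone k p.
  apply: gam_eq => /=; congr pair; last by rewrite addr0.
  by apply: functional_extensionality => x; rewrite add0r.
have := hom (gone k p) (gone k p); rewrite E.
case: (phi (gone k p)) => [[f y] Hf] /= [].
move=> e1 e2; have y0 : y = 0.
  by apply: (@addrI _ y); rewrite addr0 -e2.
subst y; apply: gam_eq => /=; congr pair.
apply: functional_extensionality => x.
have := congr1 (fun g => g x) e1 => /=; rewrite shift0.
move=> e; apply: (@addrI _ (f x)); rewrite addr0; exact: esym.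
Qed.

Lemma gpow2 k p (a : Gam k p) n : g2 (gpow a n) = g2 a *+ n.
Proof. by elim: n => [//|n IH] /=; rewrite IH mulrS. Qed.

Lemma gpow1 k p (a : Gam k p) n : g2 a = 0 -> g1 (gpow a n) = fun x => g1 a x *+ n.
Proof.
move=> a2; elim: n => [|n IH] /=; first by apply: functional_extensionality => x.
apply: functional_extensionality => x; rewrite a2 shift0 IH mulrS //.
Qed.

Lemma phi_pow k p (phi : Gam k p -> Gam k p) a n : is_aut phi -> phi (gpow a n) = gpow (phi a) n.
Proof.
move=> hphi; elim: n => [|n IH] /=; first exact: phi_one.
by rewrite hphi.2 IH.
Qed.

Lemma torsS k p (a : Gam k p) : prime p -> g2 a = 0 -> gpow a p = gone k p.
Proof.
move=> hp a2; apply: gam_eq; apply: injective_projections => /=.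
  rewrite gpow1 //; apply: functional_extensionality => x.
  by rewrite -mulr_natr pchar_Fp_0 // mulr0.
by rewrite gpow2 a2 mul0rn.
Qed.

Lemma pow_one2 k p (b : Gam k p) : prime p -> gpow b p = gone k p -> g2 b = 0.
Proof.
move=> hp E; have := congr1 (fun a => g2 a) E; rewrite gpow2 /= => E2.
apply/ffunP => i; rewrite ffunE; have := congr1 (fun f : vec k => f i) E2.
rewrite /= ffunMnE ffunE => /eqP; rewrite mulrn_eq0 => /orP [|/eqP //].
by move/eqP => p0; rewrite p0 in hp.
Qed.

Lemma phiS k p (phi : Gam k p -> Gam k p) a : prime p -> is_aut phi -> g2 a = 0 -> g2 (phi a) = 0.
Proof.
move=> hp hphi a2; apply: pow_one2 => //.
by rewrite -phi_pow // torsS // phi_one.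
Qed.

Lemma phiSinv k p (phi : Gam k p -> Gam k p) b : prime p -> is_aut phi -> g2 (phi b) = 0 -> g2 b = 0.
Proof.
move=> hp hphi b2; apply: pow_one2 => //.
apply: (bij_inj hphi.1); rewrite phi_pow // phi_one // torsS //.
Qed.


Lemma phi_conj k p (phi : Gam k p -> Gam k p) a c y : prime p -> is_aut phi ->
  g2 a = 0 -> g2 c = 0 -> g1 c = shift y (g1 a) ->
  g1 (phi c) = shift (g2 (phi (gtr p y))) (g1 (phi a)).
Proof.
move=> hp hphi a2 c2 c1.
have E : gmul (gtr p y) a = gmul c (gtr p y).
  apply: gam_eq; apply: injective_projections => /=.
    apply: functional_extensionality => x; rewrite c1 c2 /shift /= add0r addr0 //.
  by rewrite a2 c2 addr0 add0r.
have := congr1 (fun b => g1 b) (congr1 phi E); rewrite !hphi.2 /=.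
rewrite (phiS hp hphi c2) => e; apply: functional_extensionality => x.
have := congr1 (fun g => g x) e; rewrite /= shift0 [_ + g1 (phi (gtr p y)) x]addrC.
by move/(addrI (g1 (phi (gtr p y)) x)).
Qed.

Lemma phi_add k p (phi : Gam k p -> Gam k p) a b : prime p -> is_aut phi ->
  g2 a = 0 -> g1 (phi (gmul a b)) = fun x => g1 (phi a) x + g1 (phi b) x.
Proof.
move=> hp hphi a2; rewrite hphi.2 /= (phiS hp hphi a2).
by apply: functional_extensionality => x; rewrite shift0.
Qed.

Lemma w_inj k p (phi : Gam k p -> Gam k p) y1 y2 : prime p -> is_aut phi ->
  g2 (phi (gtr p y1)) = g2 (phi (gtr p y2)) -> y1 = y2.
Proof.
move=> hp hphi E.
have D : gtr p y1 = gmul (gtr p (y1 - y2)) (gtr p y2).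
  apply: gam_eq; apply: injective_projections => /=; last by rewrite subrK.
  by apply: functional_extensionality => x; rewrite add0r.
move: E; rewrite D hphi.2 gmul2 -{2}[g2 (phi (gtr p y2))]add0r => /addIr.
move/(phiSinv hp hphi) => /= /eqP; rewrite subr_eq0 => /eqP //.
Qed.

Definition elt k p (g0 : vec k -> 'F_p) (l : seq (vec k)) : Gam k p :=
  foldr (fun y acc => gmul (gpow (gdelta p y) (nat_of_ord (g0 y))) acc) (gone k p) l.

Lemma elt2 k p (g0 : vec k -> 'F_p) l : g2 (elt g0 l) = 0.
Proof. by elim: l => //= y l IH; rewrite IH gpow2 /= mul0rn addr0. Qed.

Lemma elt1 k p (g0 : vec k -> 'F_p) l :
  g1 (elt g0 l) = fun x => \sum_(y <- l) g0 y * delta p y x.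
Proof.
elim: l => [|y l IH] /=; apply: functional_extensionality => x.
  by rewrite big_nil.
rewrite gpow2 /= mul0rn shift0 IH (gpow1 _ (erefl : g2 (gdelta p y) = 0)) big_cons.
by rewrite -mulr_natr natr_Zp mulrC.
Qed.

Lemma phi_elt1 k p (phi : Gam k p -> Gam k p) (g0 : vec k -> 'F_p) l :
  prime p -> is_aut phi ->
  g1 (phi (elt g0 l)) = fun x => \sum_(y <- l) g0 y *
     shift (g2 (phi (gtr p y))) (g1 (phi (gdelta p 0))) x.
Proof.
move=> hp hphi.
elim: l => [|y l IH] /=; apply: functional_extensionality => x.
  by rewrite phi_one // big_nil.
have A2 : g2 (gpow (gdelta p y) (g0 y)) = 0 by rewrite gpow2 /= mul0rn.
rewrite (phi_add _ hp hphi A2) IH big_cons phi_pow //.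
rewrite (gpow1 _ (phiS hp hphi (erefl : g2 (gdelta p y) = 0))).
rewrite (phi_conj (a := gdelta p 0) (c := gdelta p y) (y := y) hp hphi (erefl _) (erefl _)); last first.
  by apply: functional_extensionality => z; rewrite /shift /=; unfold delta; rewrite subr_eq0.
by congr (_ + _); rewrite -[g0 y in RHS]natr_Zp mulr_natl.
Qed.

Unset Implicit Arguments.

Theorem lemma3p1 (p k : nat) (hp : prime p) (hk : (1 <= k)%N)
  (phi : Gam k p -> Gam k p) (hphi : is_aut phi) :
  exists (x0 : vec k) (m : 'F_p),
    m != 0 /\ sval (phi (gdelta p (0 : vec k))) = (fun z => m * delta p x0 z, 0 : vec k).
Proof.
have [ginv c1 c2] := hphi.1.
set b := ginv (gdelta p 0).
have hb : phi b = gdelta p 0 by rewrite /b c2.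
have b2 : g2 b = 0 by apply: (phiSinv hp hphi); rewrite hb.
have [s Hs] := proj2_sig b.
set l := undup s.
have ul : uniq l by exact: undup_uniq.
have hbe : b = elt (g1 b) l.
  apply: gam_eq; apply: injective_projections; last by rewrite b2 elt2.
  rewrite elt1; apply: functional_extensionality => x.
  case xl: (x \in l).
    rewrite (bigD1_seq x) //= /delta eqxx mulr1 big1_seq ?addr0 // => y /andP [ny _].
    by rewrite eq_sym (negbTE ny) mulr0.
  have -> : g1 b x = 0.
    by case: (g1 b x =P 0) => // /eqP /Hs; rewrite -mem_undup -/l xl.
  rewrite big1_seq // => y /andP [_ yl]; rewrite /delta.
  case: (x =P y) => [E|_]; last by rewrite mulr0.
  by rewrite -E xl in yl.
set u := g1 (phi (gdelta p 0)).
set wf := fun y => g2 (phi (gtr p y)).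
have Hd : forall x, delta p 0 x = \sum_(y <- l) g1 b y * u (x - wf y).
  move=> x; have := congr1 (fun a => g1 a x) hb; rewrite /= => <-.
  by rewrite {1}hbe (phi_elt1 _ _ hp hphi).
have [su Hsu] := proj2_sig (phi (gdelta p 0)).
have winj : {in l &, injective wf}.
  by move=> y1 y2 _ _; exact: w_inj.
have [Mu [yM [uM HM yMl cM [EM HyM]]]] :=
  key (@leV_total k) (@leV_trans k) (@leV_anti k) (@leV_tr k) Hsu ul winj Hd.
have tot' : forall x y : vec k, leV y x || leV x y by move=> x y; exact: leV_total.
have tr' : transitive (fun x y : vec k => leV y x).
  by move=> y x z h1 h2; exact: leV_trans h2 h1.
have anti' : forall x y : vec k, leV y x -> leV x y -> x = y.
  by move=> x y h1 h2; exact: leV_anti.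
have trD' : forall x y z : vec k, leV y x -> leV (y + z) (x + z).
  by move=> x y z h; exact: leV_tr.
have [mu [ym [um Hm yml cm [Em Hym]]]] :=
  key tot' tr' anti' trD' Hsu ul winj Hd.
have h1 : leV (wf ym) (wf yM) := HyM ym yml cm.
have h2 := leV_tr (- wf yM - wf ym) h1.
rewrite [wf ym + _]addrC subrK addrA subrr add0r in h2.
have eM : Mu = - wf yM by apply/eqP; rewrite -addr_eq0 EM.
have em : mu = - wf ym by apply/eqP; rewrite -addr_eq0 Em.
rewrite -eM -em in h2.
have Mm : Mu = mu by apply: leV_anti => //; exact: HM.
exists Mu, (u Mu); split => //.
rewrite [sval _]surjective_pairing; congr pair; last first.
  exact: (phiS hp hphi (erefl : g2 (gdelta p 0) = 0)).
rewrite -/u; apply: functional_extensionality => z.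
rewrite /delta; case: (z =P Mu) => [->|nz]; first by rewrite mulr1.
rewrite mulr0; apply/eqP; apply: contraT => uz; exfalso; apply: nz.
apply: leV_anti; first exact: HM.
by rewrite Mm; exact: Hm.
Qed.
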